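(* Let $M=\{(z_1,z_2)\in\mathbb{C}^2:\operatorname{Im} z_2=|z_1|^2\}$. Let $\pi_1:U_1\to\mathbb{C}^2$ be the blow-up of the origin, with exceptional curve $E_1$, and let $M_1=\overline{\pi_1^{-1}(M\setminus\{0\})}$ be the proper transform of $M$. Let $U_1'$ be the affine chart of $U_1$ with coordinates $(z_1',z_2')$ in which $\pi_1(z_1',z_2')=(z_1',z_1'z_2')$, and let $\pi_2:U_2\to U_1'$ be the blow-up of the origin $0_1'$ of $U_1'$, with exceptional curve $E_2$, and $M_2=\overline{\pi_2^{-1}(M_1\cap U_1'\setminus\{0_1'\})}$. Let $U_2'$ be the affine chart of $U_2$ with coordinates $(u_1,u_2)$ in which $\pi_2(u_1,u_2)=(u_1,u_1u_2)$, and $0_2'$ its origin. Then: (a) $E_1\subset M_1$; (b) $M_2\cap E_2$ is a closed disk, given in $U_2'$ by $\{u_1=0,\ |u_2|\ge 1\}$ (together with the point of $E_2$ at infinity of this chart); (c) $0_2'\notin M_2$, so that if $\pi_3$ is the blow-up of $U_2$ at $0_2'$ with exceptional curve $E_3$, the proper transform $M_3$ of $M_2$ satisfies $M_3\cap E_3=\varnothing$. *)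

(* Defs.v *)
From Stdlib Require Import Reals Lra.
Open Scope R_scope.

Definition CC : Type := (R * R)%type.
Definition C0 : CC := (0, 0).
Definition Cre (z : CC) : R := fst z.
Definition Cim (z : CC) : R := snd z.
Definition Cmul (z w : CC) : CC :=
  (fst z * fst w - snd z * snd w, fst z * snd w + snd z * fst w).
Definition Csub (z w : CC) : CC := (fst z - fst w, snd z - snd w).
Definition Cnorm2 (z : CC) : R := fst z * fst z + snd z * snd z.
Definition Cmod (z : CC) : R := sqrt (Cnorm2 z).

Definition inM (z1 z2 : CC) : Prop := Cim z2 = Cnorm2 z1.

Definition closure2 (S : CC -> CC -> Prop) (p q : CC) : Prop :=
  forall eps : R, 0 < eps ->
    exists a b : CC, S a b /\ Cnorm2 (Csub a p) + Cnorm2 (Csub b q) < eps.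

(* Generic blow-up of CC^2 at the origin, charts:
     chart A : (a,b) |-> (a, a b),     exceptional curve {a = 0}
     chart B : (a,b) |-> (a b, b),     exceptional curve {b = 0}
   The proper transform of a set X (given in coordinates of CC^2) is the
   closure of pi^{-1}(X \ {0}); its trace on an (open) chart is the closure
   inside that chart of the chart-preimage of X \ {0}. *)
Definition propA (X : CC -> CC -> Prop) : CC -> CC -> Prop :=
  closure2 (fun a b => a <> C0 /\ X a (Cmul a b)).
Definition propB (X : CC -> CC -> Prop) : CC -> CC -> Prop :=
  closure2 (fun a b => b <> C0 /\ X (Cmul a b) b).

(* M1 in the two charts of U1 (U1' is chart A, coordinates (z1',z2')). *)
Definition M1A : CC -> CC -> Prop := propA inM.
Definition M1B : CC -> CC -> Prop := propB inM.
(* M2 : proper transform of M1 ∩ U1' under the blow-up of 0_1'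
   (U2' is chart A, coordinates (u1,u2)). *)
Definition M2A : CC -> CC -> Prop := propA M1A.
Definition M2B : CC -> CC -> Prop := propB M1A.
(* M3 : proper transform of M2 (restricted to U2') under the blow-up at 0_2'. *)
Definition M3A : CC -> CC -> Prop := propA M2A.
Definition M3B : CC -> CC -> Prop := propB M2A.

(* Main.v *)
Require Import Defs.
From Stdlib Require Import Reals Lra Psatz.
Open Scope R_scope.

Ltac cunf := unfold Cnorm2, Cmul, Csub, Cim, Cre, C0, Cmod in *; cbn [fst snd] in *.

Lemma N_ge0 z : 0 <= Cnorm2 z.
Proof. destruct z; cunf; nra. Qed.

Lemma N_pos z : z <> C0 -> 0 < Cnorm2 z.
Proof.
  destruct z as [x y]; intro H; cunf.
  destruct (Req_dec x 0); destruct (Req_dec y 0); subst; try (exfalso; apply H; reflexivity); nra.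
Qed.

Lemma N_mul a b : Cnorm2 (Cmul a b) = Cnorm2 a * Cnorm2 b.
Proof. destruct a, b; cunf; ring. Qed.

Lemma CS_im a b : (Cim (Cmul a b))^2 <= Cnorm2 a * Cnorm2 b.
Proof. destruct a as [x y], b as [p q]; cunf.
  pose proof (pow2_ge_0 (x*p - y*q)); nra. Qed.

Lemma tri z w : Cmod z <= Cmod (Csub z w) + Cmod w.
Proof.
  unfold Cmod.
  pose proof (sqrt_pos (Cnorm2 (Csub z w))) as HA.
  pose proof (sqrt_pos (Cnorm2 w)) as HB.
  pose proof (pow2_sqrt _ (N_ge0 (Csub z w))) as EA.
  pose proof (pow2_sqrt _ (N_ge0 w)) as EB.
  set (sA := sqrt (Cnorm2 (Csub z w))) in *.
  set (sB := sqrt (Cnorm2 w)) in *.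
  rewrite <- (sqrt_pow2 (sA + sB)) by lra.
  apply sqrt_le_1_alt.
  destruct z as [z1 z2], w as [w1 w2]; cunf.
  set (d := (z1 - w1) * w1 + (z2 - w2) * w2).
  assert (Hd : d^2 <= (sA*sB)^2).
  { unfold d. replace ((sA*sB)^2) with (sA^2 * sB^2) by ring. rewrite EA, EB.
    pose proof (pow2_ge_0 ((z1-w1)*w2 - (z2-w2)*w1)). nra. }
  assert (d <= sA * sB).
  { destruct (Rle_dec d 0). nra.
    destruct (Rle_dec d (sA*sB)); auto.
    assert (0 <= sA*sB) by nra. nra. }
  replace (z1*z1 + z2*z2) with ((z1-w1)*(z1-w1) + (z2-w2)*(z2-w2) + (w1*w1+w2*w2) + 2*d) by (unfold d; ring).
  replace ((z1 - w1) * (z1 - w1) + (z2 - w2) * (z2 - w2)) with (sA^2) by (rewrite EA; ring).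
  replace (w1*w1+w2*w2) with (sB^2) by (rewrite EB; ring).
  nra.
Qed.

Ltac absall := repeat match goal with
  | H : context[Rabs ?x] |- _ => revert H
  end; unfold Rabs; repeat match goal with
  | |- context[Rcase_abs ?x] => destruct (Rcase_abs x)
  end; intros.

Lemma babs x y d B : Rabs x <= d -> Rabs y <= B -> Rabs (x*y) <= d*B.
Proof. intros; rewrite Rabs_mult; apply Rmult_le_compat; auto using Rabs_pos. Qed.

Lemma sq_small h d : 0 < d -> h*h < d^2 -> Rabs h < d.
Proof. intros. unfold Rabs; destruct Rcase_abs; nra. Qed.

Lemma M1A_eq p q : M1A p q -> Cim (Cmul p q) = Cnorm2 p.
Proof.
  destruct p as [p1 p2], q as [q1 q2]. intro H. cunf.
  destruct (Req_dec (p1 * q2 + p2 * q1) (p1 * p1 + p2 * p2)) as [E|NE]; auto. exfalso.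
  set (G := p1*q2+p2*q1 - (p1*p1+p2*p2)).
  assert (HG : 0 < Rabs G) by (apply Rabs_pos_lt; unfold G; lra).
  set (K := Rabs q1 + Rabs q2 + 3*Rabs p1 + 3*Rabs p2 + 4).
  assert (HK : 0 < K) by (unfold K; pose proof (Rabs_pos q1); pose proof (Rabs_pos q2);
     pose proof (Rabs_pos p1); pose proof (Rabs_pos p2); lra).
  set (d := Rmin 1 (Rabs G / (2*K))).
  assert (Hd0 : 0 < d) by (apply Rmin_glb_lt; [lra| apply Rdiv_lt_0_compat; lra]).
  assert (Hd1 : d <= 1) by apply Rmin_l.
  assert (HdK : d * K <= Rabs G / 2).
  { assert (d <= Rabs G / (2*K)) by apply Rmin_r.
    replace (Rabs G / 2) with (Rabs G / (2*K) * K) by (field; lra). nra. }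
  destruct (H (d^2)) as [[a1 a2] [[b1 b2] [[Ha Heq] Hdist]]]; [nra|].
  unfold inM in Heq. cunf.
  set (h1 := a1 - p1) in *. set (h2 := a2 - p2) in *.
  set (k1 := b1 - q1) in *. set (k2 := b2 - q2) in *.
  assert (Hh1 : Rabs h1 < d) by (apply sq_small; nra).
  assert (Hh2 : Rabs h2 < d) by (apply sq_small; nra).
  assert (Hk1 : Rabs k1 < d) by (apply sq_small; nra).
  assert (Hk2 : Rabs k2 < d) by (apply sq_small; nra).
  assert (Hsum : G + (h1*(q2 + k2 - 2*p1 - h1) + h2*(q1 + k1 - 2*p2 - h2) + (p1*k2 + p2*k1)) = 0).
  { unfold G, h1, h2, k1, k2. replace a1 with (p1 + (a1 - p1)) in Heq by ring.
    nra. }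
  assert (B1 : Rabs (q2 + k2 - 2*p1 - h1) <= Rabs q2 + 1 + 2*Rabs p1 + 1)
    by (clear - Hk2 Hh1 Hd1; absall; lra).
  assert (B2 : Rabs (q1 + k1 - 2*p2 - h2) <= Rabs q1 + 1 + 2*Rabs p2 + 1)
    by (clear - Hk1 Hh2 Hd1; absall; lra).
  assert (C1 := babs _ _ _ _ (Rlt_le _ _ Hh1) B1).
  assert (C2 := babs _ _ _ _ (Rlt_le _ _ Hh2) B2).
  assert (C3 := babs _ _ _ _ (Rle_refl (Rabs p1)) (Rlt_le _ _ Hk2)).
  assert (C4 := babs _ _ _ _ (Rle_refl (Rabs p2)) (Rlt_le _ _ Hk1)).
  set (T1 := h1*(q2 + k2 - 2*p1 - h1)) in *.
  set (T2 := h2*(q1 + k1 - 2*p2 - h2)) in *.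
  assert (Rabs (T1 + T2 + (p1*k2 + p2*k1)) <= d*K).
  { pose proof (Rabs_triang (T1+T2) (p1*k2+p2*k1)).
    pose proof (Rabs_triang T1 T2). pose proof (Rabs_triang (p1*k2) (p2*k1)).
    unfold K. nra. }
  replace (T1 + T2 + (p1*k2 + p2*k1)) with (- G) in H0 by lra.
  rewrite Rabs_Ropp in H0. lra.
Qed.

Lemma small_t eps : 0 < eps -> exists t, 0 < t /\ t < 1 /\ t < eps.
Proof. intros. exists (eps/(1+eps)). split; [apply Rdiv_lt_0_compat; lra|].
  split; apply Rmult_lt_reg_r with (1+eps); try lra; unfold Rdiv;
  rewrite Rmult_assoc, Rinv_l by lra; nra. Qed.

Lemma M1A_C0 w : M1A C0 w.
Proof.
  intros eps He. destruct w as [p q].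
  destruct (Req_dec (p*p+q*q) 0) as [Z|NZ].
  - assert (p=0) by nra; assert (q=0) by nra; subst.
    destruct (small_t (eps/2)) as [t [T0 [T1 T2]]]; [lra|].
    exists (t,0), (0,t). split. split. intro E; injection E; lra. unfold inM; cunf; ring.
    cunf; nra.
  - set (N := p*p+q*q) in *.
    assert (HN : 0 < N).
    { assert (HN0 : 0 <= N) by (unfold N; nra). destruct HN0 as [|E]; auto. exfalso; apply NZ; auto. }
    destruct (small_t (eps/(1+N))) as [t [T0 [T1 T2]]].
    { apply Rdiv_lt_0_compat; lra. }
    assert (T3 : t * (1+N) < eps).
    { apply Rmult_lt_reg_r with (/(1+N)). apply Rinv_0_lt_compat; lra.
      rewrite Rmult_assoc, Rinv_r by lra. lra. }
    set (al := t^2/(1+t^2)). set (be := t/(1+t^2)).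
    assert (Hab : al^2+be^2 = al) by (unfold al, be; field; nra).
    assert (Hal : 0 < al) by (unfold al; apply Rdiv_lt_0_compat; nra).
    assert (Hal2 : al <= t^2) by (unfold al; apply Rmult_le_reg_r with (1+t^2); [nra|];
       unfold Rdiv; rewrite Rmult_assoc, Rinv_l by nra; nra).
    assert (Hna : Cnorm2 (al*q - be*p, al*p + be*q) = al * N).
    { cunf. replace ((al * q - be * p) * (al * q - be * p) + (al * p + be * q) * (al * p + be * q))
        with ((al^2+be^2)*N) by (unfold N; ring). rewrite Hab; ring. }
    exists (al*q - be*p, al*p + be*q), (p,q). split. split.
    + intro E. rewrite E in Hna. cunf. nra.
    + unfold inM. rewrite Hna. cunf. unfold N; ring.
    + replace (Cnorm2 (Csub (al * q - be * p, al * p + be * q) C0))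
        with (Cnorm2 (al * q - be * p, al * p + be * q)) by (cunf; ring).
      rewrite Hna. cunf. nra.
Qed.

Lemma M1B_C0 v : M1B v C0.
Proof.
  intros eps He. destruct (small_t eps He) as [t [T0 [T1 T2]]].
  set (c := Cnorm2 v). assert (Hc : 0 <= c) by apply N_ge0.
  set (D := 1 + c^2*t^2). assert (HD : 0 < D) by (unfold D; nra).
  set (b := (t/D, c*t^2/D)).
  assert (Nb : Cnorm2 b = t^2/D).
  { unfold b; cunf. unfold D; field. unfold D in HD. lra. }
  assert (Nb2 : t^2/D <= t^2).
  { apply Rmult_le_reg_r with D; auto. unfold Rdiv; rewrite Rmult_assoc, Rinv_l by lra.
    unfold D; nra. }
  exists v, b. split. split.
  - unfold b. intro E; injection E; intros. 
    assert (0 < t/D) by (apply Rdiv_lt_0_compat; lra). lra.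
  - unfold inM. rewrite N_mul, Nb. fold c. unfold b; cunf. field. lra.
  - replace (Cnorm2 (Csub v v)) with 0 by (destruct v; cunf; ring).
    replace (Cnorm2 (Csub b C0)) with (Cnorm2 b) by (unfold b; cunf; ring).
    rewrite Nb. nra.
Qed.


Lemma Cassoc a b c : Cmul a (Cmul b c) = Cmul (Cmul a b) c.
Proof. destruct a, b, c; unfold Cmul; cbn [fst snd]; f_equal; ring. Qed.

Lemma N_sub0 z : Cnorm2 (Csub z C0) = Cnorm2 z.
Proof. destruct z; cunf; ring. Qed.

Lemma N_subz z : Cnorm2 (Csub z z) = 0.
Proof. destruct z; cunf; ring. Qed.

Lemma N_subC z w : Cnorm2 (Csub z w) = Cnorm2 (Csub w z).
Proof. destruct z, w; cunf; ring. Qed.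

Lemma N_nz z : 0 < Cnorm2 z -> z <> C0.
Proof. intros H E; subst; cunf; lra. Qed.

Lemma Cmod_ge1 z : 1 <= Cmod z -> 1 <= Cnorm2 z.
Proof. unfold Cmod; intro H. apply sqrt_le_0; [lra|apply N_ge0|]. rewrite sqrt_1; auto. Qed.

Lemma Cmod_le1 z : Cmod z <= 1 -> Cnorm2 z <= 1.
Proof. unfold Cmod; intro H. rewrite <- (pow2_sqrt (Cnorm2 z)) by apply N_ge0.
  pose proof (sqrt_pos (Cnorm2 z)). nra. Qed.

Lemma Cmod_lt z e : 0 <= e -> Cnorm2 z < e^2 -> Cmod z < e.
Proof. intros. unfold Cmod. rewrite <- (sqrt_pow2 e) by auto. apply sqrt_lt_1_alt.
  split; auto using N_ge0. Qed.

Lemma M1A_of_eq p q : Cim (Cmul p q) = Cnorm2 p -> M1A p q.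
Proof.
  intro H. destruct p as [p1 p2].
  destruct (Req_dec p1 0); destruct (Req_dec p2 0).
  1: { subst. apply M1A_C0. }
  all: intros eps He; exists (p1,p2), q; split;
       [split; [intro E; injection E as E1 E2; contradiction | exact H]
       | rewrite !N_subz; lra].
Qed.

Lemma M2A_ge p q : M2A p q -> 1 <= Cmod q.
Proof.
  intro H. destruct (Rle_dec 1 (Cmod q)) as [|NL]; auto. exfalso.
  set (r := Cmod q) in *. assert (0 <= r) by (apply sqrt_pos).
  destruct (H ((1-r)^2)) as [a [b [[Ha Hm] Hd]]]; [nra|].
  apply M1A_eq in Hm.
  assert (Nb : 1 <= Cnorm2 b).
  { pose proof (CS_im (Cmul a a) b) as HC. rewrite N_mul in HC.
    rewrite Cassoc in Hm. rewrite Hm in HC. pose proof (N_pos a Ha) as Hp.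
    set (A := Cnorm2 a) in *. set (B := Cnorm2 b) in *.
    assert (HAA : 0 < A*A) by nra.
    destruct (Rle_dec 1 B); auto. exfalso.
    assert (A*A*B < A*A*1) by (apply Rmult_lt_compat_l; lra). nra. }
  assert (1 <= Cmod b) by (unfold Cmod; rewrite <- sqrt_1; apply sqrt_le_1_alt; auto).
  assert (Cmod (Csub b q) < 1 - r).
  { apply Cmod_lt. lra. pose proof (N_ge0 (Csub a p)). lra. }
  pose proof (tri b q). fold r in H3. lra.
Qed.

Lemma sq_eq a b : 0 <= a -> 0 <= b -> a^2 = b^2 -> a = b.
Proof. intros. rewrite <- (sqrt_pow2 a), <- (sqrt_pow2 b), H1 by auto; auto. Qed.

Lemma csqrt t c1 c2 : 0 < t -> c1^2 + c2^2 = 1 ->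
  exists z, Cmul z z = (t*c1, t*c2) /\ Cnorm2 z = t.
Proof.
  intros Ht Hc.
  assert (Hc1 : -1 <= c1 <= 1) by nra.
  assert (HA : 0 <= (t + t*c1)/2) by nra.
  assert (HB : 0 <= (t - t*c1)/2) by nra.
  set (X := sqrt ((t + t*c1)/2)). set (Y := sqrt ((t - t*c1)/2)).
  assert (EX : X^2 = (t + t*c1)/2) by (apply pow2_sqrt; auto).
  assert (EY : Y^2 = (t - t*c1)/2) by (apply pow2_sqrt; auto).
  assert (X0 : 0 <= X) by apply sqrt_pos. assert (Y0 : 0 <= Y) by apply sqrt_pos.
  assert (EXY : (2*X*Y)^2 = (t*c2)^2).
  { replace ((2*X*Y)^2) with (4 * X^2 * Y^2) by ring. rewrite EX, EY.
    replace (c2) with c2 by auto. nra. }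
  destruct (Rle_dec 0 c2).
  - exists (X, Y). cunf. split. f_equal. nra.
    replace (X*Y+Y*X) with (2*X*Y) by ring. apply sq_eq; auto; nra. nra.
  - exists (X, -Y). cunf. split. f_equal. nra.
    replace (X*(-Y)+(-Y)*X) with (-(2*X*Y)) by ring.
    replace (t*c2) with (-(-(t*c2))) by ring. f_equal.
    apply sq_eq; auto; nra. nra.
Qed.

Lemma unit_M2A u v : 1 <= u*u+v*v -> exists c1 c2, c1^2+c2^2 = 1 /\ c1*v + c2*u = 1.
Proof.
  intros H. set (N := u*u+v*v) in *.
  set (s := sqrt (N-1)). assert (Hs : s^2 = N-1) by (apply pow2_sqrt; lra).
  exists ((s*u+v)/N), ((u - s*v)/N).
  assert (E : (s*u+v)^2 + (u-s*v)^2 = N*N).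
  { replace ((s*u+v)^2 + (u-s*v)^2) with ((s^2+1)*(u*u+v*v)) by ring. rewrite Hs. fold N. ring. }
  split.
  - replace (((s*u+v)/N)^2 + ((u - s*v)/N)^2) with (((s*u+v)^2 + (u-s*v)^2)/(N*N)) by (field; lra).
    rewrite E. field. lra.
  - replace ((s * u + v) / N * v + (u - s * v) / N * u) with (((s * u + v) * v + (u - s * v) * u) / N) by (field; lra).
    replace ((s * u + v) * v + (u - s * v) * u) with N by (unfold N; ring). field; lra.
Qed.

Lemma unit_M2B u v : u*u+v*v <= 1 -> exists c1 c2, c1^2+c2^2 = 1 /\ u*c2 + v*c1 = u*u+v*v.
Proof.
  intros H. set (N := u*u+v*v) in *.
  destruct (Req_dec N 0) as [Z|NZ].
  - exists 1, 0. assert (u = 0) by (unfold N in Z; nra). assert (v=0) by (unfold N in Z; nra).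
    subst. split; [ring|]. unfold N. ring.
  - assert (HN : 0 < N) by (assert (0 <= N) by (unfold N; nra); destruct H0; auto; contradiction NZ; auto).
    set (s := sqrt (N-N*N)). assert (Hs : s^2 = N-N*N) by (apply pow2_sqrt; nra).
    exists ((s*u+N*v)/N), ((N*u - s*v)/N).
    assert (E : (s*u+N*v)^2 + (N*u-s*v)^2 = N*N).
    { replace ((s*u+N*v)^2 + (N*u-s*v)^2) with ((s^2+N*N)*(u*u+v*v)) by ring. rewrite Hs. fold N. ring. }
    split.
    + replace (((s*u+N*v)/N)^2 + ((N*u - s*v)/N)^2) with (((s*u+N*v)^2 + (N*u-s*v)^2)/(N*N)) by (field; lra).
      rewrite E. field. lra.
    + replace (u * ((N * u - s * v) / N) + v * ((s * u + N * v) / N)) with ((u*(N * u - s * v) + v*(s * u + N * v)) / N) by (field; lra).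
      replace (u*(N * u - s * v) + v*(s * u + N * v)) with (N*N) by (unfold N; ring). field; lra.
Qed.

Lemma M2A_C0_iff u2 : M2A C0 u2 <-> 1 <= Cmod u2.
Proof.
  split; [apply M2A_ge|]. intro H. apply Cmod_ge1 in H.
  destruct u2 as [u v]. cunf.
  destruct (unit_M2A u v H) as [c1 [c2 [Hc Hcu]]].
  intros eps He. destruct (csqrt (eps/2) c1 c2) as [z [Hzz Hnz]]; [lra|auto|].
  exists z, (u,v). split. split.
  - apply N_nz. lra.
  - apply M1A_of_eq. rewrite Cassoc, Hzz, Hnz. cunf. nra.
  - rewrite N_subz. replace (Csub z (0,0)) with (Csub z C0) by reflexivity.
    rewrite N_sub0. lra.
Qed.

Lemma M2B_C0_iff v1 : M2B v1 C0 <-> Cmod v1 <= 1.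
Proof.
  split.
  - intro H. destruct (Rle_dec (Cmod v1) 1) as [|NL]; auto. exfalso.
    set (r := Cmod v1) in *.
    destruct (H ((r-1)^2)) as [a [b [[Hb Hm] Hd]]]; [nra|].
    apply M1A_eq in Hm. rewrite N_mul in Hm. rewrite <- Cassoc in Hm.
    pose proof (CS_im a (Cmul b b)) as HC. rewrite N_mul, Hm in HC.
    pose proof (N_pos b Hb) as Pb. pose proof (N_ge0 a) as Pa.
    set (A := Cnorm2 a) in *. set (B := Cnorm2 b) in *.
    assert (HA : A <= 1).
    { destruct (Rle_dec A 1); auto. exfalso.
      assert (HBB : 0 < B*B) by nra.
      assert (A*(B*B) < A*A*(B*B)) by (apply Rmult_lt_compat_r; nra). nra. }
    assert (Cmod a <= 1) by (unfold Cmod; rewrite <- sqrt_1; apply sqrt_le_1_alt; auto).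
    assert (Cmod (Csub v1 a) < r - 1).
    { apply Cmod_lt. lra. rewrite N_subC. pose proof (N_ge0 (Csub b C0)). lra. }
    pose proof (tri v1 a). fold r in H2. lra.
  - intro H. apply Cmod_le1 in H.
    destruct v1 as [u v]. cunf.
    destruct (unit_M2B u v H) as [c1 [c2 [Hc Hcu]]].
    intros eps He. destruct (csqrt (eps/2) c1 c2) as [z [Hzz Hnz]]; [lra|auto|].
    exists (u,v), z. split. split.
    + apply N_nz. lra.
    + apply M1A_of_eq. rewrite <- Cassoc, Hzz, N_mul, Hnz. cunf. nra.
    + rewrite N_subz, N_sub0. lra.
Qed.

Lemma N_tri2 b w : Cnorm2 b <= 2 * Cnorm2 (Csub b w) + 2 * Cnorm2 w.
Proof. destruct b as [b1 b2], w as [w1 w2]; cunf.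
  pose proof (pow2_ge_0 (b1 - 2*w1)). pose proof (pow2_ge_0 (b2 - 2*w2)). nra. Qed.

Theorem mainTheorem4 :
  ((forall w : CC, M1A C0 w) /\ (forall v : CC, M1B v C0)) /\
  ((forall u2 : CC, M2A C0 u2 <-> 1 <= Cmod u2) /\
   (forall v1 : CC, M2B v1 C0 <-> Cmod v1 <= 1)) /\
  (~ M2A C0 C0 /\
   (forall w : CC, ~ M3A C0 w) /\ (forall v : CC, ~ M3B v C0)).
Proof.
  split; [split; [apply M1A_C0|apply M1B_C0]|].
  split; [split; [apply M2A_C0_iff|apply M2B_C0_iff]|].
  split; [|split].
  - intro H. apply M2A_ge in H. unfold Cmod, Cnorm2, C0 in H; cbn [fst snd] in H.
    replace (0*0+0*0) with 0 in H by ring. rewrite sqrt_0 in H. lra.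
  - intros w H. pose proof (N_ge0 w) as Hw.
    set (e := / (2 * Cnorm2 w + 3)).
    assert (He : 0 < e) by (unfold e; apply Rinv_0_lt_compat; lra).
    assert (Hee : e * (2 * Cnorm2 w + 3) = 1) by (unfold e; field; lra).
    destruct (H e He) as [a [b [[Ha Hm] Hd]]].
    apply M2A_ge, Cmod_ge1 in Hm. rewrite N_mul in Hm. rewrite N_sub0 in Hd.
    pose proof (N_tri2 b w). pose proof (N_ge0 a). pose proof (N_ge0 (Csub b w)).
    pose proof (N_ge0 b).
    set (A := Cnorm2 a) in *. set (B := Cnorm2 b) in *.
    set (W := Cnorm2 w) in *. set (D := Cnorm2 (Csub b w)) in *.
    assert (B < 2*e + 2*W) by lra.
    assert (A * B <= e * (2*e+2*W)).
    { apply Rmult_le_compat; lra. }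
    assert (e <= 1/3) by nra.
    nra.
  - intros v H. destruct (H 1 ltac:(lra)) as [a [b [[Hb Hm] Hd]]].
    apply M2A_ge, Cmod_ge1 in Hm. rewrite N_sub0 in Hd.
    pose proof (N_ge0 (Csub a v)). lra.
Qed.
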